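(* Let $q$ be a prime power, let $\mathcal{F}=(\mathcal{F}_1,\ldots,\mathcal{F}_r)$ be a flag on $\mathbb{F}_{q^n}$ whose best friend is the subfield $\mathbb{F}_{q^m}$, and let $\beta\in\mathbb{F}_{q^n}^*\setminus\mathbb{F}_{q^m}^*$. If the code $\mathrm{Orb}_\beta(\mathcal{F})$ is disjoint, then $2mr\le d_f(\mathrm{Orb}_\beta(\mathcal{F}))$.
   Context: A flag on $\mathbb{F}_{q^n}$ is a sequence $(\mathcal{F}_1,\ldots,\mathcal{F}_r)$ of $\mathbb{F}_q$-subspaces with $\{0\}\subsetneq\mathcal{F}_1\subsetneq\cdots\subsetneq\mathcal{F}_r\subsetneq\mathbb{F}_{q^n}$. For $\beta\in\mathbb{F}_{q^n}^*$ of multiplicative order $|\beta|$, $\mathcal{U}\beta=\{u\beta:u\in\mathcal{U}\}$, $\mathcal{F}\beta=(\mathcal{F}_1\beta,\ldots,\mathcal{F}_r\beta)$ and $\mathrm{Orb}_\beta(\mathcal{F})=\{\mathcal{F}\beta^j:0\le j\le|\beta|-1\}$. A subfield $\mathbb{F}_{q^m}$ is a friend of $\mathcal{F}$ if every $\mathcal{F}_i$ is an $\mathbb{F}_{q^m}$-vector space; the best friend is the largest friend. Subspace distance $d_S(\mathcal{U},\mathcal{V})=\dim(\mathcal{U}+\mathcal{V})-\dim(\mathcal{U}\cap\mathcal{V})$; flag distance $d_f(\mathcal{F},\mathcal{F}')=\sum_i d_S(\mathcal{F}_i,\mathcal{F}'_i)$; the minimum distance of a set of flags is the minimum over distinct pairs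 (and $0$ for a single flag). A set $\mathcal{C}$ of flags is disjoint if the sets $\mathcal{C}_i$ of $i$-th subspaces satisfy $|\mathcal{C}_1|=\cdots=|\mathcal{C}_r|=|\mathcal{C}|$. *)

(* Defs.v *)
(* F_q is modelled by an arbitrary finite field F (so q = #|F|
   is a prime power), F_{q^n} by a finite-dimensional field extension L of F
   (n = \dim {:L}); F_q-subspaces of L are {vspace L}, subfields of L
   (containing F_q) are {subfield L}. *)
From HB Require Import structures.
From mathcomp Require Import all_boot all_order all_algebra all_field.
Set Implicit Arguments. Unset Strict Implicit. Unset Printing Implicit Defensive.
Import GRing.Theory.
Local Open Scope ring_scope.

Section Flags.
Variables (F : finFieldType) (L : fieldExtType F).

Definition flag := seq {vspace L}.

Definition vs_proper (U V : {vspace L}) : bool := (U <= V)%VS && (U != V).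

Definition is_flag (f : flag) : bool :=
  path vs_proper 0%VS f && (last 0%VS f != fullv).

Definition vs_scale (U : {vspace L}) (b : L) : {vspace L} := (U * <[b]>)%VS.

Definition flag_scale (f : flag) (b : L) : flag := [seq vs_scale U b | U <- f].

Definition is_mult_order (b : L) (k : nat) : Prop :=
  (0 < k)%N /\ b ^+ k = 1 /\ (forall j, (0 < j < k)%N -> b ^+ j != 1).

Definition orbitb (f : flag) (b : L) (k : nat) : seq flag :=
  undup [seq flag_scale f (b ^+ j) | j <- iota 0 k].

(* K is a friend of f: every F_i is a K-vector space *)
Definition is_friend (f : flag) (K : {subfield L}) : bool :=
  all (fun U => (K * U <= U)%VS) f.

Definition is_best_friend (f : flag) (K : {subfield L}) : Prop :=
  is_friend f K /\ forall K' : {subfield L}, is_friend f K' -> (K' <= K)%VS.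

Definition subspace_dist (U V : {vspace L}) : nat :=
  (\dim (U + V) - \dim (U :&: V))%N.

Definition flag_dist (f g : flag) : nat :=
  \sum_(i < size f) subspace_dist (nth 0%VS f i) (nth 0%VS g i).

(* minimum distance of a set of flags (given as a duplicate-free list);
   0 if there are fewer than two flags *)
Definition min_dist (C : seq flag) : nat :=
  match [seq flag_dist p.1 p.2 | p <- [seq (x, y) | x <- C, y <- C] & p.1 != p.2] with
  | [::] => 0%N
  | d :: ds => foldr minn d ds
  end.

(* C (duplicate-free list of flags of length r) is disjoint:
   |C_1| = ... = |C_r| = |C| *)
Definition disjoint_code (r : nat) (C : seq flag) : bool :=
  all (fun i => size (undup [seq nth 0%VS f i | f <- C]) == size C) (iota 0 r).

End Flags.

(* Main.v *)
Require Import Defs.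
From HB Require Import structures.
From mathcomp Require Import all_boot all_order all_algebra all_field.
From mathcomp Require Import zify.
Local Open Scope ring_scope.
Import GRing.Theory.

Lemma uniq_map_inj (T1 T2 : eqType) (g : T1 -> T2) (s : seq T1) x y :
  uniq (map g s) -> x \in s -> y \in s -> g x = g y -> x = y.
Proof.
elim: s => //= z s IH /andP [nz us]; rewrite !in_cons.
move=> /orP [/eqP->|hx] /orP [/eqP->|hy] e //.
- by rewrite e map_f in nz.
- by rewrite -e map_f in nz.
- exact: IH.
Qed.

Section Aux.
Variables (F : finFieldType) (L : fieldExtType F).

Lemma vs_scale1 (U : {vspace L}) : vs_scale U 1 = U.
Proof. by rewrite /vs_scale prodv1. Qed.

Lemma vs_scale_mod (K : {subfield L}) (U : {vspace L}) c :
  (K * U <= U)%VS -> (K * vs_scale U c <= vs_scale U c)%VS.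
Proof. by move=> H; rewrite /vs_scale prodvA prodvSl. Qed.

Lemma dist_ge (K : {subfield L}) (A B : {vspace L}) :
  (K * A <= A)%VS -> (K * B <= B)%VS -> \dim A = \dim B -> A != B ->
  (2 * \dim K <= subspace_dist A B)%N.
Proof.
move=> hA hB hd hne.
have hS : (K * (A + B) <= A + B)%VS by rewrite prodvDr addvS.
have hsc := dimv_sum_cap A B.
have d1 := field_module_dimS hA.
have d2 := field_module_dimS hS.
have hlt : (\dim A < \dim (A + B))%N.
  rewrite ltn_neqAle (dimvS (addvSl A B)) andbT.
  apply/negP => /eqP e.
  have : (A == A + B)%VS by rewrite eqEdim addvSl -e leqnn.
  move/eqP => e2.
  have : B == A by rewrite eqEdim hd leqnn andbT e2 addvSr.
  by rewrite eq_sym (negbTE hne).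
rewrite /subspace_dist.
move: d1 d2 => /dvdnP [a ea] /dvdnP [c ec].
have hK : (0 < \dim K)%N by have := dimvS (sub1v K); rewrite dimv1.
have ca : (a < c)%N by rewrite -(ltn_pmul2r hK) -ea -ec.
have h2 : (a.+1 * \dim K <= c * \dim K)%N by rewrite leq_mul2r ca orbT.
rewrite mulSn -ea -ec in h2.
move: hsc hd h2; move: (\dim (A + B)) (\dim (A :&: B)) (\dim A) (\dim B) (\dim K) => x y z w m. lia.
Qed.

Lemma stab_all (f : flag L) b :
  flag_scale f b = f -> all (fun U => vs_scale U b == U) f.
Proof.
elim: f => //= U f IH [e1 e2]; by rewrite e1 eqxx IH.
Qed.

Lemma stab_mem (K : {subfield L}) (U : {vspace L}) b :
  (K * U <= U)%VS -> vs_scale U b = U -> (<<K; b>> * U <= U)%VS.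
Proof.
move=> hK hb; apply/prodvP => x u /Fadjoin_poly_eq <- hu.
set p := Fadjoin_poly K b x.
have pK : p \is a polyOver K by apply: Fadjoin_polyOver.
have hpow : forall i, b ^+ i * u \in U.
  elim=> [|i IH]; first by rewrite expr0 mul1r.
  rewrite exprS -mulrA mulrC -hb /vs_scale; exact: memv_mul IH (memv_line b).
rewrite horner_coef mulr_suml; apply: memv_suml => i _.
rewrite -mulrA; apply: (subvP hK); apply: memv_mul; last exact: hpow.
exact: (polyOverP pK).
Qed.

Lemma minfold (B : nat) (l : seq nat) :
  l != [::] -> all (fun d => B <= d)%N l ->
  (B <= match l with [::] => 0%N | d :: ds => foldr minn d ds end)%N.
Proof.
case: l => // d ds _ /= /andP [hd].
elim: ds => //= e ds IH /andP [he hs].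
by rewrite leq_min he IH.
Qed.
End Aux.


Theorem proposition4p20 (F : finFieldType) (L : fieldExtType F)
    (f : flag L) (K : {subfield L}) (b : L) (k : nat) :
  is_flag f ->
  is_best_friend f K ->
  b != 0 -> b \notin K ->
  is_mult_order b k ->
  disjoint_code (size f) (orbitb f b k) ->
  (2 * \dim K * size f <= min_dist (orbitb f b k))%N.
Proof.
move=> hflag [hfr hbest] b0 bK [k0 [bk bord]] hdis.
have k1 : (1 < k)%N.
  case: k k0 bk {bord hdis} => [|[|k]] //= _; rewrite expr1 => e.
  by rewrite e mem1v in bK.
have hfb : flag_scale f b != f.
  apply/eqP => e.
  have hf : is_friend f <<K; b>>%AS.
    apply/allP => U hU; apply: stab_mem; first exact: (allP hfr U hU).
    by apply/eqP; exact: (allP (@stab_all _ _ _ _ e) U hU).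
  have := hbest _ hf => /subvP /(_ b (memv_adjoin K b)) hb.
  by rewrite hb in bK.
have mem j : (j < k)%N -> flag_scale f (b ^+ j) \in orbitb f b k.
  by move=> hj; rewrite mem_undup; apply/mapP; exists j; rewrite // mem_iota.
have f1 : flag_scale f 1 = f.
  by rewrite /flag_scale (eq_map (@vs_scale1 _ _)) map_id.
have hf0 : f \in orbitb f b k by have := mem 0%N k0; rewrite expr0 f1.
have hfb1 : flag_scale f b \in orbitb f b k by have := mem 1%N k1; rewrite expr1.
rewrite /min_dist; apply: minfold.
  apply/eqP => e.
  have h : (f, flag_scale f b) \in [seq p <- [seq (x, y) | x <- orbitb f b k, y <- orbitb f b k] | p.1 != p.2].
    by rewrite mem_filter /= eq_sym hfb /=; apply/allpairsP; exists (f, flag_scale f b).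
  by have := map_f (fun p => flag_dist p.1 p.2) h; rewrite e.
apply/allP => d /mapP [[x y]]; rewrite mem_filter /= => /andP [hxy /allpairsP [[x' y'] /= [hx hy [ex ey]]]] ->.
subst x' y'.
have hx' := hx; have hy' := hy.
move: hx' hy'; rewrite !mem_undup => /mapP [i _ ex] /mapP [j _ ey]; subst x y.
rewrite /flag_dist size_map.
have -> : (2 * \dim K * size f = \sum_(s < size f) (2 * \dim K))%N.
  by rewrite sum_nat_const card_ord mulnC.
apply: leq_sum => [[s hs]] _ /=.
rewrite !(nth_map 0%VS) //.
have hU := allP hfr _ (mem_nth 0%VS hs).
apply: dist_ge; try exact: vs_scale_mod.
  by rewrite /vs_scale !dim_cosetv ?expf_neq0.
have hs' : s \in iota 0 (size f) by rewrite mem_iota add0n hs.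
have hd := allP hdis s hs'.
have hu : uniq [seq nth 0%VS g s | g <- orbitb f b k].
  rewrite -[uniq _]negbK -ltn_size_undup size_map; move: hd => /= /eqP ->; by rewrite ltnn.
apply/eqP => e.
have exy : flag_scale f (b ^+ i) = flag_scale f (b ^+ j).
  apply: (@uniq_map_inj _ _ _ _ _ _ hu hx hy).
  by rewrite /= /flag_scale !(nth_map 0%VS).
move/eqP: hxy => hxy; exact: hxy exy.
Qed.
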